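(* Let $L=K_1\cup\dots\cup K_n$ be an oriented, ordered link with a surface system $\Sigma$. Let $\{b_K\}$ and $\{b_K'\}$ be two collections of base points, one on each component $K$ of $L$ (away from the intersection points of $K$ with the other surfaces), and let $m,m'\in W$ be the associated elements. Then \[m'-m\in\operatorname{span}\{v_{s,r}\mid s\neq r\},\qquad v_{s,r}=\sum_{i=1}^n\operatorname{lk}(K_i,K_r)X^{[isr]}.\]
   Context: A surface system for $L$ is a collection of embedded compact oriented surfaces $\Sigma_i\subset S^3$ with $\partial\Sigma_i=K_i$, intersecting transversally and in at most triple points. Given base points, $\widetilde w_k$ is the word in letters $\{1,\dots,n\}\times\{\pm1\}$ obtained by reading, along $K_k$ in the positive direction from its base point, the letter $i^{\varepsilon}$ for each intersection point of $K_k$ with $\Sigma_i$ ($i\ne k$), $\varepsilon$ the intersection sign. For $w=s_1^{\varepsilon_1}\cdots s_m^{\varepsilon_m}$, $e_{rs}(w)=\sum_{p<q,\,s_p=r,\,s_q=s}\varepsilon_p\varepsilon_q$. For distinct $i,j,k$, $m_{ijk}=e_{ij}(\widetilde w_k)+e_{jk}(\widetilde w_i)+e_{ki}(\widetilde w_j)$. $W=\bigwedge^3\mathbb{Z}\langle X^1,\dots,X^n\rangle$, $X^{[ijk]}=X^i\wedge X^j\wedge X^k$, and $m=\sum_{i<j<k}m_{ijk}X^{[ijk]}$ (similarly $m'$). *)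

(* Defs.v *)
From mathcomp Require Import all_boot all_order all_algebra.
Set Implicit Arguments. Unset Strict Implicit. Unset Printing Implicit Defensive.
Import GRing.Theory Num.Theory.
Local Open Scope ring_scope.

(* A letter i^eps : component index i and sign eps (true = +1, false = -1). *)
Definition letter (n : nat) := ('I_n * bool)%type.
Definition lsign (b : bool) : int := if b then 1 else -1.

Definition e_word n (r s : 'I_n) (w : seq (letter n)) : int :=
  let t := in_tuple w in
  \sum_(p < size w) \sum_(q < size w | (p < q)%N)
     (if ((tnth t p).1 == r) && ((tnth t q).1 == s)
      then lsign (tnth t p).2 * lsign (tnth t q).2 else 0).

Definition mu n (w : 'I_n -> seq (letter n)) (i j k : 'I_n) : int :=
  e_word i j (w k) + e_word j k (w i) + e_word k i (w j).

(* W = /\^3 Z<X^1..X^n>, represented by its coordinates on the basis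
   X^[abc], a<b<c; coordinates at non-increasing triples are 0. *)
Definition triple n := ('I_n * 'I_n * 'I_n)%type.
Notation W n := {ffun triple n -> int}.
Definition incr n (t : triple n) : bool :=
  ((t.1.1 < t.1.2)%N && (t.1.2 < t.2)%N).

(* X^i /\ X^j /\ X^k for arbitrary i j k : coordinate on X^[abc] is the
   3x3 minor det [delta_{x,y}]_{x in (i,j,k), y in (a,b,c)}. *)
Definition wedge3 n (i j k : 'I_n) : W n :=
  [ffun t : triple n =>
     if incr t then
       let x := [:: i; j; k] in
       let y := [:: t.1.1; t.1.2; t.2] in
       \det (\matrix_(p < 3, q < 3)
               ((nth i x p == nth i y q)%:R : int))
     else 0].

Definition melt n (w : 'I_n -> seq (letter n)) : W n :=
  [ffun t : triple n => if incr t then mu w t.1.1 t.1.2 t.2 else 0].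

Definition vsr n (lk : 'I_n -> 'I_n -> int) (s r : 'I_n) : W n :=
  \sum_(i < n) wedge3 i s r *~ lk i r.

Definition scount n (i : 'I_n) (w : seq (letter n)) : int :=
  \sum_(x <- w | x.1 == i) lsign x.2.

(* Main.v *)
Require Import Defs.
From mathcomp Require Import all_boot all_order all_algebra ring.
Import GRing.Theory Num.Theory.
Local Open Scope ring_scope.

Section W.
Variable n : nat.
Implicit Types (r s : 'I_n) (u v w : seq (letter n)).

Definition G r s (y z : letter n) : int :=
  if (y.1 == r) && (z.1 == s) then lsign y.2 * lsign z.2 else 0.

Lemma e_word_nth r s w x0 : e_word r s w =
  \sum_(p < size w) \sum_(q < size w | (p < q)%N) G r s (nth x0 w p) (nth x0 w q).
Proof. by apply: eq_bigr => p _; apply: eq_bigr => q _; rewrite !(tnth_nth x0). Qed.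

Lemma e_word_nil r s : e_word r s [::] = 0.
Proof. by rewrite /e_word big_ord0. Qed.

Lemma scount_nth s u x0 : scount s u =
  \sum_(q < size u) (if (nth x0 u q).1 == s then lsign (nth x0 u q).2 else 0).
Proof. by rewrite /scount (big_nth x0) big_mkord big_mkcond. Qed.

Lemma scount_cons s x u : scount s (x :: u) = (if x.1 == s then lsign x.2 else 0) + scount s u.
Proof. by rewrite /scount big_cons; case: ifP; rewrite ?add0r. Qed.

Lemma scount_cat s u v : scount s (u ++ v) = scount s u + scount s v.
Proof. by rewrite /scount big_cat. Qed.

Lemma e_word_cons r s x u : e_word r s (x :: u) =
  (if x.1 == r then lsign x.2 * scount s u else 0) + e_word r s u.
Proof.
rewrite !(e_word_nth _ _ _ x) /= big_ord_recl; congr (_ + _).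
  rewrite big_mkcond big_ord_recl /= add0r (scount_nth _ _ x).
  case Hx: (x.1 == r).
    rewrite mulr_sumr; apply: eq_bigr => q _; rewrite /G /= Hx /=.
    by case: ifP; rewrite ?mulr0.
  by rewrite big1 // => q _; rewrite /G /= Hx.
apply: eq_bigr => p _; rewrite big_mkcond big_ord_recl /= [RHS]big_mkcond /=.
rewrite add0r; apply: eq_bigr => q _.
by rewrite /bump /= !add1n ltnS.
Qed.

Lemma e_word_cat r s u v : e_word r s (u ++ v) =
  e_word r s u + e_word r s v + scount r u * scount s v.
Proof.
elim: u => [|x u IH] /=; first by rewrite e_word_nil /scount big_nil mul0r add0r addr0.
rewrite !e_word_cons IH scount_cat scount_cons.
case: ifP => _; ring.
Qed.


Lemma e_word_swap r s u v : e_word r s (v ++ u) - e_word r s (u ++ v) =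
  scount r (u ++ v) * scount s u - scount r u * scount s (u ++ v).
Proof. rewrite !e_word_cat !scount_cat; ring. Qed.

Lemma e_word_rot r s t w : e_word r s (rot t w) =
  e_word r s w + (scount r w * scount s (take t w) - scount r (take t w) * scount s w).
Proof.
have := e_word_swap r s (take t w) (drop t w).
rewrite cat_take_drop /rot => <-.
by rewrite addrC subrK.
Qed.

Definition d (i a : 'I_n) : int := (i == a)%:R.

Lemma sum_delta (x : 'I_n) (F : 'I_n -> int) : \sum_i d i x * F i = F x.
Proof.
rewrite (bigD1 x) //= /d eqxx mul1r big1 ?addr0 // => i /negbTE ->.
by rewrite mul0r.
Qed.

Lemma collapse1 (H : 'I_n -> 'I_n -> 'I_n -> int) x y z :
  \sum_s \sum_r \sum_i d i x * d s y * d r z * H i s r = H x y z.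
Proof.
under eq_bigr => s _ do under eq_bigr => r _ do
  (under eq_bigr => i _ do rewrite -mulrA -mulrA; rewrite sum_delta).
under eq_bigr => s _ do under eq_bigr => r _ do rewrite mulrCA.
under eq_bigr => s _ do rewrite sum_delta.
exact: sum_delta.
Qed.

Lemma sum6 (I : finType) (F1 F2 F3 F4 F5 F6 : I -> int) :
  \sum_i (F1 i - F2 i - F3 i + F4 i + F5 i - F6 i) =
  \sum_i F1 i - \sum_i F2 i - \sum_i F3 i + \sum_i F4 i + \sum_i F5 i - \sum_i F6 i.
Proof. by rewrite !(sumrB, big_split). Qed.

Definition W6 (i j k a b c : 'I_n) : int :=
  d i a * d j b * d k c - d i a * d j c * d k b - d i b * d j a * d k c
  + d i b * d j c * d k a + d i c * d j a * d k b - d i c * d j b * d k a.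

Lemma W6_exp i s r a b c (h : int) : W6 i s r a b c * h =
  d i a * d s b * d r c * h - d i a * d s c * d r b * h - d i b * d s a * d r c * h
  + d i b * d s c * d r a * h + d i c * d s a * d r b * h - d i c * d s b * d r a * h.
Proof. rewrite /W6; ring. Qed.

Lemma collapse6 (H : 'I_n -> 'I_n -> 'I_n -> int) a b c :
  \sum_s \sum_r \sum_i W6 i s r a b c * H i s r =
  H a b c - H a c b - H b a c + H b c a + H c a b - H c b a.
Proof.
under eq_bigr => s _ do under eq_bigr => r _ do
  (under eq_bigr => i _ do rewrite W6_exp; rewrite sum6).
under eq_bigr => s _ do rewrite sum6.
by rewrite sum6 !collapse1.
Qed.

Lemma det3 (R : comNzRingType) (f : nat -> nat -> R) :
  \det (\matrix_(p < 3, q < 3) f p q) =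
  f 0 0 * f 1 1 * f 2 2 - f 0 0 * f 1 2 * f 2 1 - f 0 1 * f 1 0 * f 2 2
  + f 0 1 * f 1 2 * f 2 0 + f 0 2 * f 1 0 * f 2 1 - f 0 2 * f 1 1 * f 2 0.
Proof.
rewrite (expand_det_row _ ord0) !big_ord_recl big_ord0 /cofactor.
rewrite !(expand_det_row _ ord0) !big_ord_recl !big_ord0 /cofactor.
rewrite !(expand_det_row _ ord0) !big_ord_recl !big_ord0 /cofactor.
rewrite !det_mx00 !mxE /= !expr0 !expr1 !exprS !expr0 /bump /=.
ring.
Qed.

Lemma wedge3E i j k (t : triple n) : incr t ->
  wedge3 i j k t = W6 i j k t.1.1 t.1.2 t.2.
Proof.
move=> Ht; rewrite ffunE Ht.
exact: (@det3 _ (fun p q => ((nth i [:: i; j; k] p == nth i [:: t.1.1; t.1.2; t.2] q)%:R : int))).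
Qed.

Lemma W6_diag i j a b c : W6 i j j a b c = 0.
Proof. rewrite /W6; ring. Qed.

End W.
Arguments W6 {n}. Arguments d {n}.

Theorem lemma5p6 (n : nat)
  (w w' : 'I_n -> seq (letter n))   (* words from base points b_K, b'_K *)
  (lk : 'I_n -> 'I_n -> int)        (* linking numbers lk(K_i, K_r) *)
  (Hnoself : forall k x, x \in w k -> x.1 != k)
  (Hlk : forall i r, i != r -> lk i r = scount i (w r))
  (Hlksym : forall i r, i != r -> lk i r = lk r i)
  (Hrot : forall k, exists t, w' k = rot t (w k)) :
  exists c : 'I_n -> 'I_n -> int,
    melt w' - melt w = \sum_(s < n) \sum_(r < n | s != r) vsr lk s r *~ c s r.
Proof.
have Hr k : exists t, w' k == rot t (w k) by case: (Hrot k) => t ->; exists t.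
pose tk k := ex_minn (Hr k).
have Htk k : w' k = rot (tk k) (w k) by rewrite /tk; case: ex_minnP => m /eqP.
exists (fun s r => scount s (take (tk r) (w r))).
apply/ffunP => -[[a b] c].
rewrite !ffunE sum_ffunE.
case Hinc: (incr ((a, b), c)); last first.
  rewrite subrr big1 // => s _; rewrite sum_ffunE big1 // => r _.
  rewrite ffunMzE /vsr sum_ffunE big1 ?mul0rz // => i _.
  by rewrite ffunMzE ffunE Hinc mul0rz.
under eq_bigr => s _ do rewrite sum_ffunE.
under eq_bigr => s _ do under eq_bigr => r _ do
  (rewrite ffunMzE /vsr sum_ffunE mulrzz mulr_suml;
   under eq_bigr => i _ do rewrite ffunMzE (@wedge3E _ _ _ _ _ Hinc) mulrzz -mulrA).
under eq_bigr => s _ do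
  (rewrite big_mkcond /=; under eq_bigr => r _ do
    (rewrite (_ : (if s != r then _ else 0) = \sum_(i < n) W6 i s r a b c * (lk i r * scount s (take (tk r) (w r))));
     last by case: eqP => // <-; rewrite big1 // => i _; rewrite W6_diag mul0r)).
rewrite (@collapse6 _ (fun i s r => lk i r * scount s (take (tk r) (w r)))) /=.
rewrite /mu !Htk !e_word_rot.
move: Hinc; rewrite /incr /= => /andP [Hab Hbc].
have Hac : (a < c)%N by apply: ltn_trans Hbc.
have ne : forall x y : 'I_n, (x < y)%N -> (x != y) /\ (y != x).
  by move=> x y Hxy; split; apply/eqP => E; move: Hxy; rewrite E ltnn.
have [n1 n2] := ne _ _ Hab; have [n3 n4] := ne _ _ Hbc; have [n5 n6] := ne _ _ Hac.
rewrite -(Hlk _ _ n1) -(Hlk _ _ n2) -(Hlk _ _ n3) -(Hlk _ _ n4) -(Hlk _ _ n5) -(Hlk _ _ n6).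
ring.
Qed.
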